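(* Let $\mathcal{H}>0$ be a constant such that $\|e^{-t\Delta^2}\varphi\|_{L^q}\leq\mathcal{H}t^{-\frac N4(\frac1p-\frac1q)}\|\varphi\|_{L^p}$ for all $1\leq p\leq q\leq\infty$, $t>0$, $\varphi\in L^p(\mathbb{R}^N)$ (such a constant exists). Let $1\leq p\leq2$ and $1\leq q\leq\infty$. Then: (i) $\|e^{-t\Delta^2}\varphi\|_{\exp L^2}\leq\mathcal{H}\|\varphi\|_{\exp L^2}$ for all $t>0$ and $\varphi\in\exp L^2(\mathbb{R}^N)$; (ii) $\|e^{-t\Delta^2}\varphi\|_{\exp L^2}\leq\mathcal{H}\,t^{-\frac{N}{4p}}\big(\log(t^{-\frac N4}+1)\big)^{-1/2}\|\varphi\|_{L^p}$ for all $t>0$ and $\varphi\in L^p(\mathbb{R}^N)$; (iii) $\|e^{-t\Delta^2}\varphi\|_{\exp L^2}\leq\frac{\mathcal{H}}{\sqrt{\log2}}\big[t^{-\frac{N}{4q}}\|\varphi\|_{L^q}+\|\varphi\|_{L^2}\big]$ for all $t>0$ and $\varphi\in L^q\cap L^2(\mathbb{R}^N)$.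
   Context: $e^{-t\Delta^2}$ denotes the biharmonic heat semigroup on $\mathbb{R}^N$: $e^{-t\Delta^2}\varphi=E_t\star\varphi$ with $E_t(x)=(2\pi)^{-N}\int_{\mathbb{R}^N}e^{-t|\xi|^4}e^{ix\cdot\xi}\,d\xi$. The Orlicz space $\exp L^2(\mathbb{R}^N)$ is the set of $u\in L^1_{loc}(\mathbb{R}^N)$ such that $\int_{\mathbb{R}^N}(e^{|u(x)|^2/\alpha^2}-1)\,dx<\infty$ for some $\alpha>0$, with the Luxemburg norm $\|u\|_{\exp L^2}=\inf\{\alpha>0:\int_{\mathbb{R}^N}(e^{|u(x)|^2/\alpha^2}-1)\,dx\leq 1\}$. *)

(* Defs.v *)
From HB Require Import structures.
From mathcomp Require Import all_boot all_order all_algebra.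
From mathcomp Require Import all_classical all_reals all_analysis.
From mathcomp Require Import complex.

Set Implicit Arguments.
Unset Strict Implicit.
Unset Printing Implicit Defensive.
Import Order.TTheory GRing.Theory Num.Theory.

Local Open Scope classical_set_scope.
Local Open Scope ring_scope.
Local Open Scope complex_scope.

Section prodm.
Local Open Scope ereal_scope.
Context d1 d2 (T1 : measurableType d1) (T2 : measurableType d2) (R : realType).
Variable m1 : {sigma_finite_measure set T1 -> \bar R}.
Variable m2 : {sigma_finite_measure set T2 -> \bar R}.
Definition prodm : set (T1 * T2) -> \bar R := (m1 \x m2).
HB.instance Definition _ := Measure.on prodm.
Lemma prodm_sigma_finite : sigma_finite setT prodm.
Proof.
have /sigma_finiteP[F [TF ndF Foo]] := sigma_finiteT m1.
have /sigma_finiteP[G [TG ndG Goo]] := sigma_finiteT m2.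
exists (fun n => F n `*` G n).
 rewrite -setXTT TF TG predeqE => -[x y]; split.
    move=> [/= [n _ Fnx] [k _ Gky]]; exists (maxn n k) => //; split.
    - by move: x Fnx; exact/subsetPset/ndF/leq_maxl.
    - by move: y Gky; exact/subsetPset/ndG/leq_maxr.
  by move=> [n _ []/= ? ?]; split; exists n.
move=> k; have [? ?] := Foo k; have [? ?] := Goo k.
split; first exact: measurableX.
by rewrite /prodm product_measure1E// lte_mul_pinfty// ge0_fin_numE.
Qed.
HB.instance Definition _ := Measure_isSigmaFinite.Build _ _ _ prodm
  prodm_sigma_finite.
End prodm.

(* R^(n+1) is modelled as the iterated product R * (R * ( ... * R)) with the  *)
(* product sigma-algebra and the (iterated) product of Lebesgue measures,     *)
(* i.e. N-dimensional Lebesgue measure on the Borel sets of R^N.              *)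
Record euclid (R : realType) := Euclid {
  e_disp : measure_display;
  e_type : measurableType e_disp;
  e_meas : {sigma_finite_measure set e_type -> \bar R};
  e_add : e_type -> e_type -> e_type;
  e_opp : e_type -> e_type;
  e_dot : e_type -> e_type -> R
}.

(* Rsucc_space R n is R^(n+1) *)
Fixpoint Rsucc_space (R : realType) (n : nat) : euclid R :=
  match n with
  | 0 => @Euclid R _ (measurableTypeR R)
      (@lebesgue_measure R : {sigma_finite_measure set measurableTypeR R -> \bar R}) +%R -%R *%R
  | n'.+1 =>
      let E := Rsucc_space R n' in
      @Euclid R _ (measurableTypeR R * e_type E)%type
        (@prodm _ _ (measurableTypeR R) (e_type E) R (@lebesgue_measure R) (e_meas E)
          : {sigma_finite_measure set (measurableTypeR R * e_type E)%type -> \bar R})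
        (fun x y => (x.1 + y.1, e_add x.2 y.2))
        (fun x => (- x.1, e_opp x.2))
        (fun x y => x.1 * y.1 + e_dot x.2 y.2)
  end.

(* R^N, for N >= 1 *)
Definition RN (R : realType) (N : nat) : euclid R := Rsucc_space R N.-1.
Definition pt (R : realType) (N : nat) := e_type (RN R N).
Definition lebN (R : realType) (N : nat) := e_meas (RN R N).

Definition sqnorm (R : realType) (N : nat) (x : pt R N) : R := e_dot x x.

Definition Cint (R : realType) (N : nat) (f : pt R N -> R[i]) : R[i] :=
  (Rintegral (lebN R N) setT (fun x => complex.Re (f x)))%:C
  + 'i * (Rintegral (lebN R N) setT (fun x => complex.Im (f x)))%:C.

Definition expi (R : realType) (s : R) : R[i] := (cos s +i* sin s)%C.

Definition biharm_kernel (R : realType) (N : nat) (t : R) (x : pt R N) : R[i] :=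
  ((2 * pi) ^- N)%:C *
  Cint (fun xi : pt R N => (expR (- t * (sqnorm xi) ^+ 2))%:C * expi (e_dot x xi)).

Definition biharm_sg (R : realType) (N : nat) (t : R) (phi : pt R N -> R)
  (x : pt R N) : R[i] :=
  Cint (fun y : pt R N => biharm_kernel t (e_add x (e_opp y)) * (phi y)%:C).

Definition cmod (R : realType) (z : R[i]) : R :=
  Num.sqrt (complex.Re z ^+ 2 + complex.Im z ^+ 2).

Definition LpnormC (R : realType) (N : nat) (p : \bar R) (f : pt R N -> R[i])
  : \bar R := Lnorm (lebN R N) p (fun x => (cmod (f x))%:E).

Definition Lpnorm (R : realType) (N : nat) (p : \bar R) (f : pt R N -> R)
  : \bar R := Lnorm (lebN R N) p (fun x => (`|f x|)%:E).

Definition inLp (R : realType) (N : nat) (p : \bar R) (f : pt R N -> R) : Prop :=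
  measurable_fun setT f /\ (Lpnorm p f < +oo)%E.

Definition orlicz_int (R : realType) (N : nat) (alpha : R) (absu : pt R N -> R)
  : \bar R :=
  (\int[lebN R N]_x (expR (absu x ^+ 2 / alpha ^+ 2) - 1)%:E)%E.

(* u in exp L^2 : u measurable (L^1_loc is implied) and the Orlicz integral
   is finite for some alpha > 0 *)
Definition in_expL2 (R : realType) (N : nat) (u : pt R N -> R) : Prop :=
  measurable_fun setT u /\
  exists alpha : R, 0 < alpha /\ (orlicz_int alpha (fun x => `|u x|%R) < +oo)%E.

(* Luxemburg norm inf {alpha > 0 : \int (e^{|u|^2/alpha^2} - 1) <= 1}
   (= +oo if the set is empty) *)
Definition expL2_norm_abs (R : realType) (N : nat) (absu : pt R N -> R) : \bar R :=
  ereal_inf [set (alpha%:E)%E | alpha in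
               [set alpha : R | 0 < alpha /\ (orlicz_int alpha absu <= 1)%E]].

Definition expL2_normC (R : realType) (N : nat) (u : pt R N -> R[i]) : \bar R :=
  expL2_norm_abs (fun x => cmod (u x)).
Definition expL2_norm (R : realType) (N : nat) (u : pt R N -> R) : \bar R :=
  expL2_norm_abs (fun x => `|u x|).

(* 1/q for q in [1, +oo] (1/+oo = 0) *)
Definition einv (R : realType) (q : \bar R) : R :=
  match q with r%:E => r^-1 | _ => 0 end.

(* Main.v *)
Set Warnings "-all".
Require Import Defs.
From HB Require Import structures.
From mathcomp Require Import all_boot all_order all_algebra.
From mathcomp Require Import all_classical all_reals all_analysis.
From mathcomp Require Import complex.
From mathcomp Require Import measurable_realfun ess_sup_inf.
From mathcomp Require Import ring lra.
Import Order.TTheory GRing.Theory Num.Theory.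
Local Open Scope classical_set_scope.
Local Open Scope ring_scope.
Section S.
Context {R : realType}.
Local Open Scope ereal_scope.

Lemma series_exp_full (y : R) :
  \sum_(k <oo) ((exp_coeff y k)%:E) = (expR y)%:E.
Proof.
rewrite /expR -EFin_lim; last exact: is_cvg_series_exp_coeff.
apply: (congr1 (fun u => limn u)); apply/funext => n /=.
by rewrite sumEFin.
Qed.

Lemma series_exp (y : R) : (0 <= y)%R ->
  \sum_(k <oo) ((y ^+ k.+1 / (k.+1)`!%:R)%:E) = (expR y - 1)%:E.
Proof.
move=> y0.
have c0 k : 0 <= (exp_coeff y k)%:E.
  by rewrite lee_fin /exp_coeff /= divr_ge0 // exprn_ge0.
have := series_exp_full y.
rewrite nneseries_recl // -(nneseries_addn 1) // => H.
have -> : (expR y - 1)%R = (expR y - exp_coeff y 0)%R.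
  by rewrite /exp_coeff /= expr0 fact0 divr1.
rewrite EFinB -H addeAC subee ?add0e //.
by apply: eq_eseriesr => k _; rewrite /exp_coeff /= addn1.
Qed.
End S.

Section Orl.
Import HBNNSimple.
Context d (T : measurableType d) (R : realType) (mu : {measure set T -> \bar R}).
Local Open Scope ereal_scope.

Lemma orlicz_series (g : T -> R) (b : R) : (0 < b)%R -> measurable_fun setT g ->
  \int[mu]_x (expR (g x ^+ 2 / b ^+ 2) - 1)%:E =
  \sum_(k <oo) \int[mu]_x (((g x ^+ 2 / b ^+ 2) ^+ k.+1 / (k.+1)`!%:R)%:E).
Proof.
move=> b0 mg.
have y0 x : (0 <= g x ^+ 2 / b ^+ 2)%R by rewrite divr_ge0 // sqr_ge0.
under eq_integral do rewrite -series_exp //.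
apply: integral_nneseries => //.
- move=> n; apply/measurable_EFinP.
  apply: measurable_funM; last exact: measurable_cst.
  apply: measurable_funX; apply: measurable_funM; last exact: measurable_cst.
  exact: measurable_funX.
- move=> n x _; rewrite lee_fin divr_ge0 // exprn_ge0 //.
Qed.

Lemma orlicz_lower (u : T -> R) (b : R) (c : \bar R) : (0 < b)%R ->
  (forall x, 0 <= u x)%R ->
  (forall g : T -> R, measurable_fun setT g -> (forall x, 0 <= g x <= u x)%R ->
     \int[mu]_x (expR (g x ^+ 2 / b ^+ 2) - 1)%:E <= c) ->
  \int[mu]_x (expR (u x ^+ 2 / b ^+ 2) - 1)%:E <= c.
Proof.
move=> b0 u0 Hg.
rewrite ge0_integralTE; last first.
  by move=> x; rewrite lee_fin subr_ge0 -expR0 ler_expR divr_ge0 // sqr_ge0.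
apply: ge_ereal_sup => _ [h /= hle <-].
pose g x := (b * Num.sqrt (ln (1 + h x)))%R.
have h0 x : (0 <= h x)%R by apply: fun_ge0.
have mg : measurable_fun setT g.
  apply: measurable_funM; first exact: measurable_cst.
  apply: measurableT_comp; first exact: continuous_measurable_fun (@sqrt_continuous R).
  apply: measurableT_comp; first exact: measurable_ln.
  apply: measurable_funD; first exact: measurable_cst.
  exact: measurable_funPT.
have Fg x : (expR (g x ^+ 2 / b ^+ 2) - 1 = h x)%R.
  rewrite /g exprMn sqr_sqrtr; last by rewrite ln_ge0 // lerDl.
  rewrite mulrAC mulfV ?mul1r; last by rewrite expf_neq0 // gt_eqF.
  rewrite lnK; first by rewrite addrAC subrr add0r.
  by rewrite posrE (lt_le_trans ltr01) // lerDl.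
have g0 x : (0 <= g x)%R by rewrite /g mulr_ge0 // ltW.
have gu x : (g x <= u x)%R.
  have := hle x; rewrite -Fg lee_fin lerD2r ler_expR.
  rewrite ler_pM2r; last by rewrite invr_gt0 exprn_gt0.
  by rewrite ler_sqr // nnegrE.
have -> : sintegral mu h = \int[mu]_x (h x)%:E.
  by rewrite integral_nnsfun // patch_setT.
under eq_integral do rewrite -Fg.
apply: Hg => // x; by rewrite g0 gu.
Qed.

Lemma LpI (f : T -> R) (m : nat) (B : R) : (0 < m)%N -> (forall x, 0 <= f x)%R ->
  (0 <= B)%R ->
  Lnorm mu (m%:R)%:E (fun x => (f x)%:E) <= B%:E ->
  \int[mu]_x ((f x) ^+ m)%:E <= (B ^+ m)%:E.
Proof.
move=> m0 f0 B0 HN.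
have m0' : (m%:R != 0 :> R)%R by rewrite pnatr_eq0 -lt0n.
have := poweR_Lnorm mu (fun x => (f x)%:E) m0'.
under eq_integral do rewrite abse_EFin poweR_EFin ger0_norm // powR_mulrn //.
move=> <-.
rewrite -(powR_mulrn _ B0) -poweR_EFin.
apply: gt0_ler_poweR => //.
- by rewrite in_itv /= Lnorm_ge0 leey.
- by rewrite in_itv /= lee_fin B0 leey.
Qed.

Lemma le_lower (f g : T -> \bar R) : (forall x, 0 <= f x) -> (forall x, f x <= g x) ->
  \int[mu]_x f x <= \int[mu]_x g x.
Proof.
move=> f0 fg.
have g0 x : 0 <= g x by apply: le_trans (f0 x) (fg x).
rewrite !ge0_integralTE //; apply: le_ereal_sup => _ [h /= hf <-].
by exists h => //= x; apply: le_trans (hf x) (fg x).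
Qed.

Lemma term_eq (g : T -> R) (b : R) (n : nat) : (0 < b)%R -> measurable_fun setT g ->
  \int[mu]_x (((g x ^+ 2 / b ^+ 2) ^+ n / n`!%:R)%:E) =
  (((n`!%:R * b ^+ (2 * n))^-1)%:E * \int[mu]_x ((g x ^+ (2 * n))%:E)).
Proof.
move=> b0 mg.
rewrite -ge0_integralZl_EFin //; last first.
- by rewrite invr_ge0 mulr_ge0 // exprn_ge0 // ltW.
- by apply/measurable_EFinP; exact: measurable_funX.
- by move=> x _; rewrite lee_fin exprM exprn_ge0 // sqr_ge0.
apply: eq_integral => x _; congr EFin.
rewrite expr_div_n -!exprM invfM.
by rewrite [LHS]mulrC [LHS]mulrA [LHS]mulrAC.
Qed.

Lemma orlicz_le (u : T -> R) (b : R) (s : nat -> \bar R) : (0 < b)%R ->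
  (forall x, 0 <= u x)%R ->
  (forall g : T -> R, measurable_fun setT g -> (forall x, 0 <= g x <= u x)%R ->
     forall k, \int[mu]_x (((g x ^+ 2 / b ^+ 2) ^+ k.+1 / (k.+1)`!%:R)%:E) <= s k) ->
  \sum_(k <oo) s k <= 1 ->
  \int[mu]_x (expR (u x ^+ 2 / b ^+ 2) - 1)%:E <= 1.
Proof.
move=> b0 u0 Hs Hsum.
apply: orlicz_lower => // g mg hg.
rewrite orlicz_series //; apply: le_trans Hsum.
apply: lee_nneseries => [k _ _|k _]; last exact: Hs.
apply: integral_ge0 => x _; rewrite lee_fin divr_ge0 // exprn_ge0 //.
by rewrite divr_ge0 // sqr_ge0.
Qed.

Lemma LpEq (f : T -> R) (m : nat) : (0 < m)%N -> (forall x, 0 <= f x)%R ->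
  (Lnorm mu (m%:R)%:E (fun x => (f x)%:E)) `^ m%:R = \int[mu]_x ((f x) ^+ m)%:E.
Proof.
move=> m0 f0.
have m0' : (m%:R != 0 :> R)%R by rewrite pnatr_eq0 -lt0n.
rewrite poweR_Lnorm //.
by under eq_integral do rewrite abse_EFin poweR_EFin ger0_norm // powR_mulrn //.
Qed.
End Orl.

Lemma norm_le (R : realType) (N : nat) (absu : pt R N -> R) (b0 : R) : (0 <= b0)%R ->
  (forall b, (b0 < b)%R -> (orlicz_int b absu <= 1)%E) ->
  (expL2_norm_abs absu <= b0%:E)%E.
Proof.
move=> b00 Hb; apply/lee_addgt0Pr => e e0.
apply: ereal_inf_lbound; exists (b0 + e)%R => //; split.
  by rewrite ltr_wpDl.
by apply: Hb; rewrite ltrDl.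
Qed.

Definition Hyp (R : realType) (N : nat) (H : R) :=
  forall (p q : \bar R) (t : R) (phi : pt R N -> R),
      (1 <= p)%E -> (p <= q)%E -> 0 < t -> inLp p phi ->
      (LpnormC q (biharm_sg t phi)
        <= (H * powR t (- (N%:R / 4) * (einv p - einv q)))%:E * Lpnorm p phi)%E.

Lemma cmod_ge0 (R : realType) (z : R[i]) : 0 <= cmod z.
Proof. exact: sqrtr_ge0. Qed.

Lemma part2 (R : realType) (N : nat) (H : R) : (0 < N)%N -> 0 < H -> Hyp R N H ->
  forall p : R, 1 <= p <= 2 ->
  (forall (t : R) (phi : pt R N -> R), 0 < t -> inLp p%:E phi ->
         (expL2_normC (biharm_sg t phi)
           <= (H * powR t (- (N%:R / (4 * p)))
                 * powR (ln (powR t (- (N%:R / 4)) + 1)) (- 2^-1))%:E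
              * Lpnorm p%:E phi)%E).
Proof.
move=> N0 H0 hyp p /andP[p1 p2] t phi t0 [mphi finp].
have p0 : 0 < p by apply: lt_le_trans p1.
set A := fine (Lpnorm p%:E phi).
have A0' : (0 <= Lpnorm p%:E phi)%E by apply: Lnorm_ge0.
have EA : Lpnorm p%:E phi = A%:E by rewrite fineK // ge0_fin_numE.
have A0 : 0 <= A by rewrite -lee_fin -EA.
set L := ln (powR t (- (N%:R / 4)) + 1).
have L0 : 0 < L by rewrite ln_gt0 // ltrDr powR_gt0.
set D := H * A * powR t (- (N%:R / (4 * p))).
have D0 : 0 <= D by rewrite mulr_ge0 ?powR_ge0 // mulr_ge0 // ltW.
set Lp := powR L (- 2^-1).
have Lp0 : 0 < Lp by rewrite powR_gt0.
rewrite EA -EFinM.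
have -> : H * powR t (- (N%:R / (4 * p))) * Lp * A = D * Lp.
  by rewrite /D; ring.
apply: norm_le; first by rewrite mulr_ge0 // ltW.
move=> b hb.
have b0 : 0 < b by apply: le_lt_trans hb; rewrite mulr_ge0 // ltW.
have DLb : D ^+ 2 <= L * b ^+ 2.
  have : (D * Lp) ^+ 2 <= b ^+ 2.
    rewrite ler_sqr ?nnegrE; [exact: ltW | by rewrite mulr_ge0 // ltW | exact: ltW].
  rewrite exprMn /Lp -(powR_mulrn 2 (powR_ge0 _ _)) -powRrM.
  have -> : - 2^-1 * 2%:R = -1 :> R by field.
  rewrite powR_inv1; last exact: ltW.
  move=> h.
  apply: le_trans (ler_wpM2l (ltW L0) h).
  by rewrite mulrCA mulfV ?gt_eqF // mulr1.
set tp := powR t (N%:R / 4).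
have tp0 : 0 < tp by rewrite powR_gt0.
rewrite /orlicz_int.
apply: (@orlicz_le _ _ R (lebN R N) _ b (fun k => (tp * (L ^+ k.+1 / (k.+1)`!%:R))%:E)) => //.
- by move=> x; exact: cmod_ge0.
- move=> g mg hg k.
  rewrite term_eq //.
  set n := k.+1; set m := (2 * n)%N.
  have m0 : (0 < m)%N by rewrite /m muln_gt0.
  have mR0 : (m%:R != 0 :> R) by rewrite pnatr_eq0 -lt0n.
  set u := fun x => cmod (biharm_sg t phi x).
  set C := H * powR t (- (N%:R / 4) * (p^-1 - (m%:R)^-1)).
  have C0 : 0 <= C by rewrite mulr_ge0 ?powR_ge0 // ltW.
  have hC := hyp p%:E (m%:R)%:E t phi.
  have {hC} hC : (LpnormC (m%:R)%:E (biharm_sg t phi) <= (C * A)%:E)%E.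
    rewrite EFinM -EA; apply: hC => //.
    - by rewrite lee_fin (le_trans p2) // ler_nat /m leq_pmulr.
  have hU : (\int[lebN R N]_x (u x ^+ m)%:E <= ((C * A) ^+ m)%:E)%E.
    apply: LpI => //.
    - by move=> x; exact: cmod_ge0.
    - exact: mulr_ge0.
  have hG : (\int[lebN R N]_x (g x ^+ m)%:E <= \int[lebN R N]_x (u x ^+ m)%:E)%E.
    apply: le_lower => x; first by rewrite lee_fin exprn_ge0 //; case/andP: (hg x).
    by case/andP: (hg x) => g0 gu; rewrite lee_fin ler_pXn2r // nnegrE // (le_trans g0).
  have h0 : (0 <= ((n`!%:R * b ^+ m)^-1)%:E)%E.
    by rewrite lee_fin invr_ge0 mulr_ge0 // exprn_ge0 // ltW.
  apply: le_trans (lee_wpmul2l h0 (le_trans hG hU)) _.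
  rewrite -EFinM lee_fin.
  have CA : (C * A) ^+ m = tp * D ^+ m.
    have e : - (N%:R / 4) * (p^-1 - (m%:R)^-1) = - (N%:R / (4 * p)) + N%:R / 4 / m%:R.
      by field; rewrite mR0 gt_eqF.
    rewrite /C e powRD; last by rewrite (gt_eqF t0) implybT.
    have -> : H * (t `^ (- (N%:R / (4 * p))) * t `^ (N%:R / 4 / m%:R)) * A =
      (H * A * t `^ (- (N%:R / (4 * p)))) * t `^ (N%:R / 4 / m%:R) by ring.
    rewrite exprMn -(powR_mulrn _ (powR_ge0 _ _)) -powRrM divfK // mulrC.
    by [].
  have Dm : D ^+ m <= L ^+ n * b ^+ m.
    rewrite /m !exprM -exprMn ler_pXn2r // ?nnegrE //.
      by rewrite exprn_ge0.
    by rewrite mulr_ge0 ?exprn_ge0 // ltW.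
  rewrite CA.
  have fn0 : (n`!%:R != 0 :> R) by rewrite pnatr_eq0 -lt0n fact_gt0.
  have bm0 : (b ^+ m != 0) by rewrite expf_neq0 // gt_eqF.
  apply: (@le_trans _ _ ((n`!%:R * b ^+ m)^-1 * (tp * (L ^+ n * b ^+ m)))).
    apply: ler_wpM2l; first by rewrite invr_ge0 mulr_ge0 // exprn_ge0 // ltW.
    by apply: ler_wpM2l => //; exact: ltW.
  by rewrite le_eqVlt; apply/orP; left; apply/eqP; field; rewrite fn0 bm0.
- under eq_eseriesr do rewrite EFinM.
  rewrite nneseriesZl; last first.
    by move=> k _; rewrite lee_fin divr_ge0 // exprn_ge0 // ltW.
  rewrite series_exp; last exact: ltW.
  rewrite lnK; last by rewrite posrE addr_gt0 // powR_gt0.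
  rewrite addrK -EFinM /tp powRN mulfV //.
  by rewrite gt_eqF // powR_gt0.
Qed.

Lemma part3 (R : realType) (N : nat) (H : R) : (0 < N)%N -> 0 < H -> Hyp R N H ->
  forall q : \bar R, (1 <= q)%E ->
      (forall (t : R) (phi : pt R N -> R), 0 < t -> inLp q phi -> inLp 2%:E phi ->
         (expL2_normC (biharm_sg t phi)
           <= (H / Num.sqrt (ln 2))%:E
              * ((powR t (- (N%:R / 4 * einv q)))%:E * Lpnorm q phi
                 + Lpnorm 2%:E phi))%E).
Proof.
move=> N0 H0 hyp q q1 t phi t0 [mphi finq] [_ fin2].
set Aq := fine (Lpnorm q phi).
have EAq : Lpnorm q phi = Aq%:E by rewrite fineK // ge0_fin_numE // Lnorm_ge0.
have Aq0 : 0 <= Aq by rewrite -lee_fin -EAq Lnorm_ge0.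
set A2 := fine (Lpnorm 2%:E phi).
have EA2 : Lpnorm 2%:E phi = A2%:E by rewrite fineK // ge0_fin_numE // Lnorm_ge0.
have A20 : 0 <= A2 by rewrite -lee_fin -EA2 Lnorm_ge0.
set a := powR t (- (N%:R / 4 * einv q)) * Aq.
have a0 : 0 <= a by rewrite mulr_ge0 // powR_ge0.
rewrite EAq EA2 -EFinM.
set l2 := ln (2 : R).
have l20 : 0 < l2 by rewrite ln_gt0 // ltr1n.
set s2 := Num.sqrt l2.
have s20 : 0 < s2 by rewrite sqrtr_gt0.
set B := H * (a + A2).
have B0 : 0 <= B by rewrite mulr_ge0 ?addr_ge0 // ltW.
have -> : H / s2 * (t `^ (- (N%:R / 4 * einv q)) * Aq + A2) = B / s2.
  by rewrite /B /a; ring.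
apply: norm_le; first by rewrite divr_ge0 // ltW.
move=> b hb.
have b0 : 0 < b by apply: le_lt_trans hb; rewrite divr_ge0 // ltW.
have Bb : B ^+ 2 <= l2 * b ^+ 2.
  have : (B / s2) ^+ 2 <= b ^+ 2.
    rewrite ler_sqr ?nnegrE; [exact: ltW | by rewrite divr_ge0 // ltW | exact: ltW].
  rewrite expr_div_n sqr_sqrtr; last exact: ltW.
  move=> h; apply: le_trans (ler_wpM2l (ltW l20) h).
  by rewrite mulrCA mulfV ?gt_eqF // mulr1.
set u := fun x => cmod (biharm_sg t phi x).
have u0 x : 0 <= u x by exact: cmod_ge0.
have hinf := hyp q +oo%E t phi q1 (leey _) t0 (conj mphi finq).
have einf : einv (+oo%E : \bar R) = 0 by [].
rewrite einf subr0 mulNr EAq -EFinM -mulrA in hinf.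
have ae : \forall x \ae (lebN R N), u x <= H * a.
  move: hinf; rewrite /LpnormC unlock /=; case: ifP => mu0.
  - move/ess_supP; apply: filterS => x /=.
    by rewrite ger0_norm ?lee_fin // cmod_ge0.
  - move=> _; exists setT; split => //.
    by apply/eqP; rewrite eq_le measure_ge0 andbT; move/negbT: mu0; rewrite -leNgt.
have h2 := hyp 2%:E 2%:E t phi.
rewrite subrr mulr0 powRr0 mulr1 EA2 -EFinM in h2.
have h12 : (1 <= (2%:E : \bar R))%E by rewrite lee_fin ler1n.
have {}h2 := h2 h12 (le_refl _) t0 (conj mphi fin2).
have hU2 : (\int[lebN R N]_x (u x ^+ 2)%:E <= ((H * A2) ^+ 2)%:E)%E.
  apply: (@LpI _ _ R (lebN R N) u 2) => //.
  by rewrite mulr_ge0 // ltW.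
rewrite /orlicz_int.
apply: (@orlicz_le _ _ R (lebN R N) _ b (fun k => (l2 ^+ k.+1 / (k.+1)`!%:R)%:E)) => //.
- move=> g mg hg k.
  rewrite term_eq //.
  set n := k.+1; set m := (2 * n)%N.
  have g0 x : 0 <= g x by case/andP: (hg x).
  have hG2 : (\int[lebN R N]_x (g x ^+ 2)%:E <= \int[lebN R N]_x (u x ^+ 2)%:E)%E.
    apply: le_lower => x; first by rewrite lee_fin exprn_ge0.
    by case/andP: (hg x) => _ gu; rewrite lee_fin ler_pXn2r // nnegrE // (le_trans (g0 x)).
  have Ha0 : 0 <= H * a by rewrite mulr_ge0 // ltW.
  have hGm : (\int[lebN R N]_x (g x ^+ m)%:E <=
              ((H * a) ^+ (2 * k))%:E * \int[lebN R N]_x (g x ^+ 2)%:E)%E.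
    rewrite -ge0_integralZl_EFin //; last first.
    - by rewrite exprn_ge0.
    - by apply/measurable_EFinP; exact: measurable_funX.
    - by move=> x _; rewrite lee_fin exprn_ge0.
    apply: ae_ge0_le_integral => //.
    - by move=> x _; rewrite lee_fin exprn_ge0.
    - by apply/measurable_EFinP; exact: measurable_funX.
    - by move=> x _; rewrite lee_fin mulr_ge0 // exprn_ge0.
    - apply/measurable_EFinP; apply: measurable_funM; first exact: measurable_cst.
      exact: measurable_funX.
    apply: filterS ae => x /= uxa _.
    rewrite lee_fin /m /n mulnS exprD mulrC.
    apply: ler_wpM2r; first by rewrite exprn_ge0.
    rewrite !exprM; apply: lerXn2r; rewrite ?nnegrE ?exprn_ge0 //.
    case/andP: (hg x) => gx0 gu.
    rewrite ler_sqr ?nnegrE //; exact: le_trans gu uxa.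
  have h0 : (0 <= ((n`!%:R * b ^+ m)^-1)%:E)%E.
    by rewrite lee_fin invr_ge0 mulr_ge0 // exprn_ge0 // ltW.
  apply: le_trans (lee_wpmul2l h0 (le_trans hGm (lee_wpmul2l _ (le_trans hG2 hU2)))) _.
    by rewrite lee_fin exprn_ge0.
  rewrite -!EFinM lee_fin.
  have Bm : (H * a) ^+ (2 * k) * (H * A2) ^+ 2 <= l2 ^+ n * b ^+ m.
    apply: (@le_trans _ _ (B ^+ m)).
      rewrite /m /n mulnS exprD mulrC.
      have HA20 : 0 <= H * A2 by rewrite mulr_ge0 //; exact: ltW.
      apply: ler_pM; rewrite ?exprn_ge0 //; apply: lerXn2r; rewrite ?nnegrE //;
        rewrite /B; apply: ler_wpM2l; rewrite ?lerDl ?lerDr //; exact: ltW.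
    rewrite /m !exprM -exprMn ler_pXn2r // ?nnegrE //.
      by rewrite exprn_ge0.
    by rewrite mulr_ge0 ?exprn_ge0 // ltW.
  have fn0 : (n`!%:R != 0 :> R) by rewrite pnatr_eq0 -lt0n fact_gt0.
  have bm0 : (b ^+ m != 0) by rewrite expf_neq0 // gt_eqF.
  apply: (@le_trans _ _ ((n`!%:R * b ^+ m)^-1 * (l2 ^+ n * b ^+ m))).
    apply: ler_wpM2l; first by rewrite invr_ge0 mulr_ge0 // exprn_ge0 // ltW.
    exact: Bm.
  by rewrite le_eqVlt; apply/orP; left; apply/eqP; field; rewrite fn0 bm0.
- rewrite series_exp; last exact: ltW.
  rewrite lnK; last by rewrite posrE ltr0n.
  by rewrite lee_fin; lra.
Qed.

Lemma LpDef d (T : measurableType d) (R : realType) (mu : {measure set T -> \bar R})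
  (f : T -> R) (m : nat) : (forall x, 0 <= f x) ->
  Lnorm mu (m%:R)%:E (fun x => (f x)%:E) = ((\int[mu]_x (f x ^+ m)%:E) `^ (m%:R^-1)%R)%E.
Proof.
move=> f0; rewrite unlock /=; congr (_ `^ _)%E.
by apply: eq_integral => x _; rewrite ger0_norm // powR_mulrn.
Qed.

Lemma part1 (R : realType) (N : nat) (H : R) : (0 < N)%N -> 0 < H -> Hyp R N H ->
  (forall (t : R) (phi : pt R N -> R), 0 < t -> in_expL2 phi ->
         (expL2_normC (biharm_sg t phi) <= H%:E * expL2_norm phi)%E).
Proof.
move=> N0 H0 hyp t phi t0 [mphi [a0 [a00 fin0]]].
set v := fun x => `|phi x|.
have v0 x : 0 <= v x by exact: normr_ge0.
have mv : measurable_fun setT v by apply: measurableT_comp.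
have finJ k : (\int[lebN R N]_x (v x ^+ (2 * k.+1))%:E < +oo)%E.
  have c0 : 0 < ((k.+1)`!%:R * a0 ^+ (2 * k.+1))^-1.
    by rewrite invr_gt0 mulr_gt0 ?exprn_gt0 // ltr0n fact_gt0.
  have : (((((k.+1)`!%:R * a0 ^+ (2 * k.+1))^-1)%:E *
            \int[lebN R N]_x (v x ^+ (2 * k.+1))%:E) < +oo)%E.
    rewrite -term_eq //; apply: le_lt_trans fin0.
    apply: le_lower => x.
      by rewrite lee_fin divr_ge0 // exprn_ge0 // divr_ge0 // sqr_ge0.
    rewrite lee_fin lerBrDl; apply: expR_ge1Dxn.
    by rewrite divr_ge0 // sqr_ge0.
  have [->|] := eqVneq (\int[lebN R N]_x (v x ^+ (2 * k.+1))%:E)%E +oo%E.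
    by rewrite gt0_muley ?lte_fin // ltxx.
  move=> hne _; rewrite lt_neqAle hne leey //.
have finL k : (Lpnorm ((2 * k.+1)%:R)%:E phi < +oo)%E.
  rewrite /Lpnorm (@LpDef _ _ R (lebN R N) v) //.
  move: (finJ k); case: (\int[lebN R N]_x (v x ^+ (2 * k.+1))%:E)%E => [r _| //|_].
    by rewrite poweR_EFin ltry.
  rewrite poweRE; case: ifP => _ //=; rewrite ?ltry //.
rewrite /expL2_normC /expL2_norm /expL2_norm_abs.
rewrite -ereal_inf_pZl //.
apply: le_ereal_inf => _ [_ [al [al0 hal] <-] <-].
exists (H * al); last by rewrite EFinM.
split; first by rewrite mulr_gt0.
rewrite /orlicz_int.
have := (@orlicz_le _ _ R (lebN R N) (fun x => cmod (biharm_sg t phi x)) (H * al)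
  (fun k => (\int[lebN R N]_x (((v x ^+ 2 / al ^+ 2) ^+ k.+1 / (k.+1)`!%:R)%:E))%E)).
move=> hh; apply: hh.
- by rewrite mulr_gt0.
- by move=> x; exact: cmod_ge0.
- move=> g mg hg k.
  rewrite term_eq ?mulr_gt0 // (@term_eq _ _ R (lebN R N) v) //.
  set n := k.+1; set m := (2 * n)%N.
  have m0 : (0 < m)%N by rewrite /m muln_gt0.
  set u := fun x => cmod (biharm_sg t phi x).
  set Am := fine (Lpnorm (m%:R)%:E phi).
  have EAm : Lpnorm (m%:R)%:E phi = Am%:E.
    by rewrite fineK // ge0_fin_numE ?Lnorm_ge0 //; exact: finL.
  have Am0 : 0 <= Am by rewrite -lee_fin -EAm Lnorm_ge0.
  have m1 : (1 <= (m%:R)%:E :> \bar R)%E by rewrite lee_fin ler1n.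
  have hC := hyp (m%:R)%:E (m%:R)%:E t phi m1 (le_refl _) t0 (conj mphi (finL k)).
  rewrite subrr mulr0 powRr0 mulr1 EAm -EFinM in hC.
  have hU : (\int[lebN R N]_x (u x ^+ m)%:E <= ((H * Am) ^+ m)%:E)%E.
    apply: (@LpI _ _ R (lebN R N) u m) => //.
      by move=> x; exact: cmod_ge0.
    by rewrite mulr_ge0 // ltW.
  have hG : (\int[lebN R N]_x (g x ^+ m)%:E <= \int[lebN R N]_x (u x ^+ m)%:E)%E.
    apply: le_lower => x; first by rewrite lee_fin exprn_ge0 //; case/andP: (hg x).
    by case/andP: (hg x) => g0 gu; rewrite lee_fin ler_pXn2r // nnegrE // (le_trans g0).
  have hJ : (\int[lebN R N]_x (v x ^+ m)%:E = (Am ^+ m)%:E)%E.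
    rewrite -(@LpEq _ _ R (lebN R N) v m m0 v0).
    rewrite -[Lnorm _ _ _]/(Lpnorm (m%:R)%:E phi) EAm poweR_EFin powR_mulrn //.
  rewrite hJ.
  have h0 : (0 <= ((n`!%:R * (H * al) ^+ m)^-1)%:E)%E.
    by rewrite lee_fin invr_ge0 mulr_ge0 // exprn_ge0 // mulr_ge0 // ltW.
  apply: le_trans (lee_wpmul2l h0 (le_trans hG hU)) _.
  have fn0 : (n`!%:R != 0 :> R) by rewrite pnatr_eq0 -lt0n fact_gt0.
  have Hm0 : (H ^+ m != 0) by rewrite expf_neq0 // gt_eqF.
  have am0 : (al ^+ m != 0) by rewrite expf_neq0 // gt_eqF.
  rewrite -!EFinM lee_fin le_eqVlt; apply/orP; left; apply/eqP.
  by rewrite !exprMn; field; rewrite fn0 Hm0 am0.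
- by rewrite -orlicz_series.
Qed.

Theorem proposition3p4 (R : realType) (N : nat) (H : R) :
  (0 < N)%N -> 0 < H ->
  (forall (p q : \bar R) (t : R) (phi : pt R N -> R),
      (1 <= p)%E -> (p <= q)%E -> 0 < t -> inLp p phi ->
      (LpnormC q (biharm_sg t phi)
        <= (H * powR t (- (N%:R / 4) * (einv p - einv q)))%:E * Lpnorm p phi)%E) ->
  forall (p : R) (q : \bar R), 1 <= p <= 2 -> (1 <= q)%E ->
  [/\ (* (i) *)
      (forall (t : R) (phi : pt R N -> R), 0 < t -> in_expL2 phi ->
         (expL2_normC (biharm_sg t phi) <= H%:E * expL2_norm phi)%E),
      (* (ii) *)
      (forall (t : R) (phi : pt R N -> R), 0 < t -> inLp p%:E phi ->
         (expL2_normC (biharm_sg t phi)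
           <= (H * powR t (- (N%:R / (4 * p)))
                 * powR (ln (powR t (- (N%:R / 4)) + 1)) (- 2^-1))%:E
              * Lpnorm p%:E phi)%E)
    & (* (iii) *)
      (forall (t : R) (phi : pt R N -> R), 0 < t -> inLp q phi -> inLp 2%:E phi ->
         (expL2_normC (biharm_sg t phi)
           <= (H / Num.sqrt (ln 2))%:E
              * ((powR t (- (N%:R / 4 * einv q)))%:E * Lpnorm q phi
                 + Lpnorm 2%:E phi))%E)].
Proof.
move=> N0 H0 hyp p q hp hq; split.
- exact: part1.
- exact: part2.
- exact: part3.
Qed.
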